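(* Let $S$ be a $\mathcal{C}$-semigroup with $S\neq \mathcal{C}$ and genus $g$. Then $S$ is symmetric if and only if $g=\# I_S(F(S))$.
   Context: An integer cone $\mathcal{C}\subseteq\mathbb{N}^p$ is the set of integer points of a finitely generated rational cone in $\mathbb{Q}_{\ge0}^p$. A $\mathcal{C}$-semigroup is a subset $S\subseteq\mathcal{C}$ containing $0$, closed under addition, with $\mathcal{C}\setminus S$ finite; $\mathcal{H}(S)=\mathcal{C}\setminus S$ and $g=\#\mathcal{H}(S)$. A monomial order $\preceq$ on $\mathbb{N}^p$ is fixed (total order, compatible with addition, $\mathbf 0\preceq\mathbf c$ for all $\mathbf c$), and $F(S)=\max_\preceq\mathcal{H}(S)$. $\mathrm{PF}(S)=\{\mathbf x\in\mathcal{H}(S)\mid \mathbf x+(S\setminus\{0\})\subseteq S\}$. $S$ is symmetric if $\mathrm{PF}(S)=\{F(S)\}$. For $L\subseteq\mathbb{N}^p$, $\mathbf x\le_L\mathbf y$ means $\mathbf y-\mathbf x\in L$. For $\mathbf n\in\mathcal{C}$, $I_S(\mathbf n)=\{\mathbf s\in S\mid \mathbf s\le_{\mathcal{C}}\mathbf n\}$. *)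

(* Defs.v *)
From mathcomp Require Import all_boot all_order all_algebra.
Set Implicit Arguments. Unset Strict Implicit. Unset Printing Implicit Defensive.
Import Order.TTheory GRing.Theory Num.Theory.

Definition vec (p : nat) := {ffun 'I_p -> nat}.
Definition vadd (p : nat) (x y : vec p) : vec p := [ffun i => x i + y i].
Definition vzero (p : nat) : vec p := [ffun => 0%N].

Definition vset (p : nat) := vec p -> Prop.

Definition has_card (p : nat) (A : vset p) (n : nat) : Prop :=
  exists s : seq (vec p), [/\ uniq s, (forall x, x \in s <-> A x) & size s = n].

(* C is an integer cone: the set of integer points of the rational cone
   generated by finitely many vectors of Q_{>=0}^p. *)
Definition integer_cone (p : nat) (C : vset p) : Prop :=
  exists (k : nat) (gens : 'I_k -> 'I_p -> rat),
    (forall j i, 0 <= gens j i)%R /\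
    forall x : vec p, C x <->
      exists lam : 'I_k -> rat, (forall j, 0 <= lam j)%R /\
        forall i, ((x i)%:R = \sum_(j < k) lam j * gens j i)%R.

Definition monomial_order (p : nat) (le : vec p -> vec p -> Prop) : Prop :=
  (forall x, le x x) /\
  (forall x y, le x y -> le y x -> x = y) /\
  (forall x y z, le x y -> le y z -> le x z) /\
  (forall x y, le x y \/ le y x) /\
  (forall x y z, le x y -> le (vadd x z) (vadd y z)) /\
  (forall c, le (vzero p) c).

Definition holes (p : nat) (C S : vset p) : vset p := fun x => C x /\ ~ S x.

Definition C_semigroup (p : nat) (C S : vset p) : Prop :=
  [/\ (forall x, S x -> C x), S (vzero p),
      (forall x y, S x -> S y -> S (vadd x y)) &
      exists n, has_card (holes C S) n].

Definition is_Frobenius (p : nat) (le : vec p -> vec p -> Prop) (C S : vset p)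
  (f : vec p) : Prop :=
  holes C S f /\ forall h, holes C S h -> le h f.

Definition PF (p : nat) (C S : vset p) : vset p :=
  fun x => holes C S x /\ forall s, S s -> s <> vzero p -> S (vadd x s).

Definition symmetric_sg (p : nat) (C S : vset p) (f : vec p) : Prop :=
  forall x, PF C S x <-> x = f.

Definition le_L (p : nat) (L : vset p) (x y : vec p) : Prop :=
  exists c, L c /\ vadd x c = y.

Definition I_S (p : nat) (C S : vset p) (n : vec p) : vset p :=
  fun s => S s /\ le_L C s n.

(* Main.v *)
Require Import Defs.
From mathcomp Require Import all_boot all_order all_algebra.
From Stdlib Require Import Classical.
Set Implicit Arguments. Unset Strict Implicit. Unset Printing Implicit Defensive.
Import Order.TTheory GRing.Theory Num.Theory.

Definition vsub p (x y : vec p) : vec p := [ffun i => x i - y i].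

Lemma vaddC p (x y : vec p) : vadd x y = vadd y x.
Proof. by apply/ffunP=> i; rewrite !ffunE addnC. Qed.
Lemma vaddA p (x y z : vec p) : vadd x (vadd y z) = vadd (vadd x y) z.
Proof. by apply/ffunP=> i; rewrite !ffunE addnA. Qed.
Lemma vadd0 p (x : vec p) : vadd (vzero p) x = x.
Proof. by apply/ffunP=> i; rewrite !ffunE. Qed.
Lemma vaddr0 p (x : vec p) : vadd x (vzero p) = x.
Proof. by rewrite vaddC vadd0. Qed.
Lemma vadd_sub p (x c y : vec p) : vadd x c = y -> c = vsub y x.
Proof. by move=> <-; apply/ffunP=> i; rewrite !ffunE addKn. Qed.
Lemma vsub_sub p (x c y : vec p) : vadd x c = y -> vsub y (vsub y x) = x.
Proof.
move=> H; rewrite -(vadd_sub H); symmetry; apply: (vadd_sub (c := x)).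
by rewrite vaddC.
Qed.
Lemma vadd_cancel p (x s : vec p) : vadd x s = x -> s = vzero p.
Proof.
move=> H; apply/ffunP=> i; have := congr1 (fun f : vec p => f i) H.
rewrite !ffunE => E.
by apply/eqP; rewrite -(eqn_add2l (x i)) addn0 E.
Qed.

Lemma cone_add p (C : vset p) : integer_cone C ->
  forall x y, C x -> C y -> C (vadd x y).
Proof.
case=> k [gens [gpos HC]] x y /HC [lx [lxp Hx]] /HC [ly [lyp Hy]].
apply/HC; exists (fun j => lx j + ly j)%R; split.
- by move=> j; rewrite addr_ge0.
- move=> i; rewrite ffunE natrD Hx Hy -big_split /=.
  by apply: eq_bigr => j _; rewrite mulrDl.
Qed.

Lemma exists_max (T : eqType) (le : T -> T -> Prop) (P : T -> Prop) (l : seq T) :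
  (forall x y, le x y \/ le y x) -> (forall x, le x x) ->
  (forall x y z, le x y -> le y z -> le x z) ->
  (exists x, x \in l /\ P x) -> exists m, P m /\ forall y, y \in l -> P y -> le y m.
Proof.
move=> tot refl tr; elim: l => [|a l IH] [x [Hx Px]]; first by [].
case: (classic (exists x, x \in l /\ P x)) => [ex|nex].
- have [m [Pm Hm]] := IH ex.
  case: (classic (P a)) => Pa.
  + case: (tot a m) => Ham.
    * exists m; split=> // y; rewrite inE => /orP [/eqP -> //|]; exact: Hm.
    * exists a; split=> // y; rewrite inE => /orP [/eqP -> _ //|Hy Py].
      exact: tr (Hm _ Hy Py) Ham.
  + exists m; split=> // y; rewrite inE => /orP [/eqP -> //|]; exact: Hm.
- have Pa : P a.
    move: Hx; rewrite inE => /orP [/eqP <- //|Hx]; exfalso; apply: nex; by exists x.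
  exists a; split=> // y; rewrite inE => /orP [/eqP -> //|Hy Py].
  exfalso; apply: nex; by exists y.
Qed.

Section Main.
Variables (p : nat) (C S : vset p) (le : vec p -> vec p -> Prop) (f : vec p) (g : nat).
Hypotheses (HC : integer_cone C) (Hle : monomial_order le) (HS : C_semigroup C S)
  (Hg : has_card (holes C S) g) (HF : is_Frobenius le C S f).

Definition Q := forall h, holes C S h -> exists s, S s /\ vadd h s = f.

Lemma le_add x s : le x (vadd x s).
Proof.
case: Hle => _ [_ [_ [_ [comp z]]]].
have := comp _ _ x (z s); by rewrite vadd0 vaddC.
Qed.

Lemma sym_Q : symmetric_sg C S f <-> Q.
Proof.
case: HS => SC S0 Sadd _.
case: Hle => refl [anti [tr [tot _]]].
case: Hg => hs [uhs mhs _].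
split.
- move=> sym h Hh; apply: NNPP => nex.
  pose P x := holes C S x /\ exists s, S s /\ x = vadd h s.
  have [m [[Hm [s0 [Ss0 Em]]] Mm]] :
    exists m, P m /\ forall y, y \in hs -> P y -> le y m.
    apply: exists_max => //; exists h; split; first by apply/mhs.
    by split=> //; exists (vzero p); rewrite vaddr0.
  have : PF C S m.
    split=> // s Ss sn0; apply: NNPP => nS.
    have Hy : holes C S (vadd m s).
      split=> //; apply: cone_add => //; [by case: Hm | exact: SC].
    have Py : P (vadd m s).
      split=> //; exists (vadd s0 s); split; first exact: Sadd.
      by rewrite Em vaddA.
    have Hle1 := Mm _ (proj2 (mhs _) Hy) Py.
    apply: sn0; apply: (@vadd_cancel _ m); apply: anti => //; exact: le_add.
  move/sym => Emf; apply: nex; exists s0; split=> //; by rewrite -Em.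
- move=> HQ x; split.
  + case=> Hx PFx; have [s [Ss E]] := HQ x Hx.
    case: (classic (s = vzero p)) => [s0|s0].
      by rewrite -E s0 vaddr0.
    exfalso; have := PFx s Ss s0; rewrite E; by case: HF => [[_ ?] _].
  + move=> ->; case: HF => Hf Mf; split=> // s Ss s0; apply: NNPP => nS.
    have Hy : holes C S (vadd f s).
      split=> //; apply: cone_add => //; [by case: Hf | exact: SC].
    apply: s0; apply: (@vadd_cancel _ f); apply: anti; [exact: Mf | exact: le_add].
Qed.

Lemma card_Q : has_card (I_S C S f) g <-> Q.
Proof.
case: HS => SC S0 Sadd _.
case: Hg => hs [uhs mhs shs].
have hole_c : forall x c, S x -> C c -> vadd x c = f -> holes C S c.
  move=> x c Sx Cc E; split=> // Sc; case: HF => [[_ Sf] _]; apply: Sf.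
  by rewrite -E; apply: Sadd.
split.
- case=> ls [uls mls sls].
  pose ms := map (vsub f) ls.
  have ums : uniq ms.
    rewrite map_inj_in_uniq // => x y /mls [_ [cx [_ Ex]]] /mls [_ [cy [_ Ey]]] E.
    by rewrite -(vsub_sub Ex) -(vsub_sub Ey) E.
  have sub : {subset ms <= hs}.
    move=> y /mapP [x /mls [Sx [c [Cc E]]] ->]; apply/mhs.
    rewrite -(vadd_sub E); exact: hole_c E.
  have sz : size hs <= size ms by rewrite size_map shs sls.
  have [_ eqm] := uniq_min_size ums sub sz.
  move=> h /mhs; rewrite -eqm => /mapP [x /mls [Sx [c [Cc E]]] Eh].
  exists x; split=> //; rewrite Eh -(vadd_sub E) vaddC //.
- move=> HQ; exists (map (vsub f) hs); split.
  + rewrite map_inj_in_uniq // => x y /mhs Hx /mhs Hy E.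
    have [sx [_ Ex]] := HQ _ Hx; have [sy [_ Ey]] := HQ _ Hy.
    by rewrite -(vsub_sub Ex) -(vsub_sub Ey) E.
  + move=> x; split.
    * move=> /mapP [h /mhs Hh ->]; have [s [Ss E]] := HQ _ Hh.
      rewrite -(vadd_sub E); split=> //; exists h; split; first by case: Hh.
      by rewrite vaddC.
    * case=> Sx [c [Cc E]]; apply/mapP; exists c; first by apply/mhs; exact: hole_c E.
      by apply: vadd_sub; rewrite vaddC.
  + by rewrite size_map.
Qed.

End Main.

Theorem mainTheorem2 (p : nat) (C S : vset p) (le : vec p -> vec p -> Prop)
  (f : vec p) (g : nat) :
  integer_cone C -> monomial_order le -> C_semigroup C S ->
  ~ (forall x, S x <-> C x) ->
  has_card (holes C S) g ->
  is_Frobenius le C S f ->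
  (symmetric_sg C S f <-> has_card (I_S C S f) g).
Proof.
move=> HC Hle HS _ Hg HF.
rewrite (sym_Q HC Hle HS Hg HF) (card_Q HS Hg HF) //.
Qed.
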